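(* If $x\in\mathbb R^n$ satisfies $Ax\le\tilde b$ for every $\tilde b\in B_1\times\cdots\times B_m$, then there exists $w\in\mathcal W$ such that $x=x(w)$. That is, $$\{x: Ax\le\tilde b\ \ \forall\tilde b\in B_1\times\cdots\times B_m\}\subseteq\{x(w):w\in\mathcal W\}.$$
   Context: $A\in\mathbb R^{m\times n}$ (rows $a_i^\top$) has full column rank $n\le m$, $b^{(0)}\in\mathbb R^m$, and $\{x:Ax\le b^{(0)}\}$ is bounded with nonempty interior. For $w\in\mathbb R^m_{++}$, the weighted center $(x(w),y(w),s(w))$ is the unique solution of $Ax+s=b^{(0)}$, $s>0$, $A^\top y=0$, $\mathrm{Diag}(s)y=w$. For each $i$, $\Delta b_i=(\Delta b_i^1,\dots,\Delta b_i^{N_i})$ is a nonzero vector with nonnegative entries and $B_i=\{b_i^{(0)}+\sum_{l=1}^{N_i}\Delta b_i^lz^l: z\in[-1,1]^{N_i}\}$. $\mathcal W=\{w\in\mathbb R^m_{++}: \sum_iw_i=1,\ y_i(w)\|\Delta b_i\|_1\le w_i<1\ \forall i\}$. *)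

(* Defs.v *)
(* the statement is purely order-algebraic, stated for an
   arbitrary real field R (covers R = the reals). *)
From HB Require Import structures.
From mathcomp Require Import all_boot all_order all_algebra.
Set Implicit Arguments. Unset Strict Implicit. Unset Printing Implicit Defensive.
Import Order.TTheory GRing.Theory Num.Theory.
Local Open Scope ring_scope.

Section Defs.
Variable R : realFieldType.

Definition in_poly (m n : nat) (A : 'M[R]_(m, n)) (b : 'cV[R]_m) (x : 'cV[R]_n) :=
  forall i, (A *m x) i 0 <= b i 0.

Definition poly_bounded (m n : nat) (A : 'M[R]_(m, n)) (b : 'cV[R]_m) :=
  exists M : R, forall x, in_poly A b x -> forall j, `|x j 0| <= M.

Definition poly_nonempty_interior (m n : nat) (A : 'M[R]_(m, n)) (b : 'cV[R]_m) :=
  exists x0 : 'cV[R]_n, exists eps : R, 0 < eps /\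
    forall x : 'cV[R]_n, (forall j, `|x j 0 - x0 j 0| < eps) -> in_poly A b x.

Definition weighted_center (m n : nat) (A : 'M[R]_(m, n)) (b0 : 'cV[R]_m)
    (w : 'cV[R]_m) (x : 'cV[R]_n) (y s : 'cV[R]_m) :=
  A *m x + s = b0 /\ (forall i, 0 < s i 0) /\ A^T *m y = 0 /\
  (forall i, s i 0 * y i 0 = w i 0).

Definition l1norm (k : nat) (v : 'I_k -> R) := \sum_(l < k) `|v l|.

Definition in_B (k : nat) (b0i : R) (db : 'I_k -> R) (t : R) :=
  exists z : 'I_k -> R, (forall l, -1 <= z l <= 1) /\
    t = b0i + \sum_(l < k) db l * z l.

Definition robust_feasible (m n : nat) (A : 'M[R]_(m, n)) (b0 : 'cV[R]_m)
    (N : 'I_m -> nat) (db : forall i : 'I_m, 'I_(N i) -> R) (x : 'cV[R]_n) :=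
  forall bt : 'cV[R]_m, (forall i, in_B (b0 i 0) (db i) (bt i 0)) -> in_poly A bt x.

(* w is in the set W: w > 0, sum w = 1, and y_i(w) ||Delta b_i||_1 <= w_i < 1,
   where y is the y-component of the weighted center of w *)
Definition in_W (m : nat) (N : 'I_m -> nat) (db : forall i : 'I_m, 'I_(N i) -> R)
    (w y : 'cV[R]_m) :=
  (forall i, 0 < w i 0) /\ \sum_(i < m) w i 0 = 1 /\
  (forall i, y i 0 * l1norm (db i) <= w i 0 /\ w i 0 < 1).

End Defs.

(* Main.v *)
From HB Require Import structures.
From mathcomp Require Import all_boot all_order all_algebra.
From mathcomp Require Import lra.
Require Import Defs.
Import Order.TTheory GRing.Theory Num.Theory.
Local Open Scope ring_scope.

Section Farkas.
Variable R : realFieldType.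
Variable n : nat.
Definition dotv (u v : 'cV[R]_n) := \sum_j u j 0 * v j 0.

Lemma dotBl u v e : dotv (u - v) e = dotv u e - dotv v e.
Proof. by rewrite /dotv -sumrB; apply eq_bigr => j _; rewrite !mxE mulrBl. Qed.
Lemma dotBr u v e : dotv e (u - v) = dotv e u - dotv e v.
Proof. by rewrite /dotv -sumrB; apply eq_bigr => j _; rewrite !mxE mulrBr. Qed.
Lemma dotZl a u e : dotv (a *: u) e = a * dotv u e.
Proof. by rewrite /dotv mulr_sumr; apply eq_bigr => j _; rewrite !mxE mulrA. Qed.
Lemma dotZr a u e : dotv e (a *: u) = a * dotv e u.
Proof. by rewrite /dotv mulr_sumr; apply eq_bigr => j _; rewrite !mxE mulrCA. Qed.

Lemma dot_gt0 c : c != 0 -> 0 < dotv c c.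
Proof.
move=> cn0; rewrite lt_def; apply/andP; split; last first.
  by apply: sumr_ge0 => j _; rewrite -expr2 sqr_ge0.
apply: contra cn0 => /eqP H.
have H' := psumr_eq0P (fun j _ => (eq_ind _ (fun x => 0 <= x) (sqr_ge0 (c j 0)) _ (expr2 _))) H.
apply/eqP/matrixP => i j; rewrite ord1 mxE.
by have /eqP := H' i isT; rewrite mulf_eq0 orbb => /eqP.
Qed.

Lemma farkas (k : nat) : forall (f : nat -> 'cV[R]_n) (c : 'cV[R]_n),
 (exists lam : nat -> R, (forall i, 0 <= lam i) /\ c = \sum_(i < k) lam i *: f i) \/
 (exists d, (forall i, (i < k)%N -> dotv (f i) d <= 0) /\ 0 < dotv c d).
Proof.
elim: k => [|k IH] f c.
  case: (eqVneq c 0) => [->|cn0].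
    by left; exists (fun _ => 0); split=> //; rewrite big_ord0.
  by right; exists c; split; [move=> i; rewrite ltn0 | apply: dot_gt0].
have [[lam [lam0 ->]] | [d [fd cd]]] := IH f c.
  left; exists (fun i => if (i < k)%N then lam i else 0); split.
    by move=> i; case: ifP.
  rewrite big_ord_recr /= ltnn scale0r addr0; apply eq_bigr => i _.
  by rewrite ltn_ord.
case: (lerP (dotv (f k) d) 0) => fkd.
  right; exists d; split => // i; rewrite ltnS leq_eqVlt.
  by case/orP => [/eqP->|/fd].
set al := dotv (f k) d.
have aln0 : al != 0 by rewrite gt_eqF.
have [[lam [lam0 Hc]] | [e [fe ce]]] :=
   IH (fun i => f i - (dotv (f i) d / al) *: f k) (c - (dotv c d / al) *: f k).
  left; set mu := (dotv c d - \sum_(i<k) lam i * dotv (f i) d) / al.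
  exists (fun i => if (i < k)%N then lam i else mu); split.
    move=> i; case: ifP => // _; apply: divr_ge0; last exact: ltW.
    rewrite subr_ge0; apply: le_trans (ltW cd); apply: sumr_le0 => j _.
    by apply: mulr_ge0_le0 => //; exact: fd.
  rewrite big_ord_recr /= ltnn.
  rewrite (eq_bigr (fun i : 'I_k => lam i *: f i)); last by move=> i _; rewrite ltn_ord.
  have E : \sum_(i<k) lam i *: (f i - (dotv (f i) d / al) *: f k) =
     \sum_(i<k) lam i *: f i - ((\sum_(i<k) lam i * dotv (f i) d) / al) *: f k.
    rewrite (eq_bigr (fun i:'I_k => lam i *: f i - (lam i * dotv (f i) d / al) *: f k)); last first.
      by move=> i _; rewrite scalerBr scalerA mulrA.
    by rewrite sumrB -scaler_suml mulr_suml.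
  move: Hc; rewrite E => Hc.
  rewrite -[c](subrK ((dotv c d / al) *: f k)) Hc /mu -addrA; congr (_ + _).
  by rewrite mulrBl scalerBl addrC.
right; exists (e - (dotv (f k) e / al) *: d).
have key : forall v, dotv v (e - (dotv (f k) e / al) *: d) =
                     dotv (v - (dotv v d / al) *: f k) e.
  move=> v; rewrite dotBr dotZr dotBl dotZl; congr (_ - _).
  by rewrite [LHS]mulrC [LHS]mulrA [RHS]mulrAC.
split; last by rewrite key.
move=> i; rewrite ltnS leq_eqVlt => /orP[/eqP->|ik]; last by rewrite key; exact: fe.
by rewrite dotBr dotZr -/al divfK // subrr.
Qed.
End Farkas.
Arguments dotv {R n}.
Arguments farkas {R n}.

Lemma dot_row (R : realFieldType) m n (A : 'M[R]_(m, n)) i d :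
  dotv (row i A)^T d = (A *m d) i 0.
Proof. by rewrite /dotv mxE; apply eq_bigr => j _; rewrite !mxE. Qed.

Lemma trmx_mul_sum (R : realFieldType) m n (A : 'M[R]_(m, n)) (y : 'cV[R]_m) :
  A^T *m y = \sum_i y i 0 *: (row i A)^T.
Proof.
by apply/matrixP => j j'; rewrite ord1 !mxE summxE; apply eq_bigr => i _; rewrite !mxE mulrC.
Qed.

Theorem propositionC1 (R : realFieldType) (m n : nat)
  (A : 'M[R]_(m, n)) (b0 : 'cV[R]_m)
  (N : 'I_m -> nat) (db : forall i : 'I_m, 'I_(N i) -> R)
  (Hn : (0 < n)%N) (Hnm : (n <= m)%N)
  (Hrank : \rank A = n)
  (Hbdd : poly_bounded A b0)
  (Hint : poly_nonempty_interior A b0)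
  (Hdb_nonneg : forall i l, 0 <= db i l)
  (Hdb_nonzero : forall i, exists l, db i l != 0)
  (x : 'cV[R]_n) :
  robust_feasible A b0 db x ->
  exists w : 'cV[R]_m, exists y s : 'cV[R]_m,
    weighted_center A b0 w x y s /\ in_W db w y.
Proof.
move=> Hrob.
set s := b0 - A *m x.
have Hs : forall i, l1norm (db i) <= s i 0 /\ 0 < l1norm (db i).
  move=> i.
  have nrm : l1norm (db i) = \sum_l db i l.
    by apply eq_bigr => l _; rewrite ger0_norm.
  split.
    pose bt := \col_j (b0 j 0 - \sum_l db j l).
    have H : forall j, in_B (b0 j 0) (db j) (bt j 0).
      move=> j; exists (fun _ => -1); split; first by move=> l; apply/andP; split; intros; lra.
      by rewrite mxE (eq_bigr (fun l => - db j l) (fun l _ => mulrN1 _)) sumrN.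
    have := Hrob bt H i; rewrite /s nrm !mxE => h; intros; lra.
  case: (Hdb_nonzero i) => l0 hl0.
  have p0 : 0 < db i l0 by rewrite lt_def hl0 Hdb_nonneg.
  have : 0 <= \sum_(l | l != l0) db i l by apply: sumr_ge0 => l _; exact: Hdb_nonneg.
  move=> Hr; rewrite nrm (bigD1 l0) //=; lra.
have Hspos : forall i, 0 < s i 0.
  by move=> i; case: (Hs i) => h1 h2; exact: lt_le_trans h2 h1.
have Hxin : forall i, (A *m x) i 0 <= b0 i 0.
  move=> i; have := Hspos i; rewrite /s !mxE => h.
  intros; lra.
have Hrec : forall d : 'cV[R]_n, (forall i, (A *m d) i 0 <= 0) -> d = 0.
  move=> d Hd; case: Hbdd => M HM.
  apply/matrixP => j j'; rewrite ord1 mxE; apply/eqP; apply/negP => /negP dj.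
  have M0 : 0 <= M by apply: le_trans (HM x Hxin j); exact: normr_ge0.
  have dj0 : 0 < `|d j ord0| by rewrite normr_gt0.
  set t := (M + `|x j ord0| + 1) / `|d j ord0|.
  have t0 : 0 <= t by apply: divr_ge0; [have := normr_ge0 (x j ord0); lra | exact: ltW].
  have feas : in_poly A b0 (x + t *: d).
    move=> i; rewrite mulmxDr -scalemxAr.
    have h1 := Hxin i; have h2 : t * (A *m d) i ord0 <= 0 by apply: mulr_ge0_le0.
    rewrite !mxE in h1 h2 *; lra.
  have := HM _ feas j; rewrite !mxE => h.
  have := lerB_normD (t * d j ord0) (x j ord0).
  rewrite normrM (ger0_norm t0) /t divfK; last by rewrite gt_eqF.
  move=> H; rewrite addrC /t in h; have K : M + `|x j ord0| + 1 - `|x j ord0| <= M := le_trans H h; by rewrite addrAC addrK gerDl ler10 in K.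
have Hk : forall k : 'I_m, exists yk : 'cV[R]_m,
    (forall i, 0 <= yk i 0) /\ 1 <= yk k 0 /\ A^T *m yk = 0.
  move=> k; pose f := fun i : nat => (row (insubd k i) A)^T.
  case: (farkas m f (- f k)) => [[lam [lam0 Hc]] | [d [fd cd]]].
    exists (\col_i (lam i + (i == k)%:R)); split.
      by move=> i; rewrite mxE addr_ge0 ?ler0n.
    split; first by rewrite mxE eqxx; apply: ler_wpDl.
    rewrite trmx_mul_sum.
    rewrite (eq_bigr (fun i : 'I_m => lam i *: f i + (i == k)%:R *: (row i A)^T)); last first.
      by move=> i _; rewrite mxE scalerDl /f valKd.
    rewrite big_split /= -Hc (bigD1 k) //= eqxx scale1r big1 ?addr0.
      by rewrite /f valKd addNr.
    by move=> i /negbTE ->; rewrite scale0r.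
  exfalso.
  have Ad : forall i, (A *m d) i 0 <= 0.
    by move=> i; have := fd i (ltn_ord i); rewrite /f valKd dot_row.
  move: cd; rewrite (Hrec d Ad) /dotv big1 ?ltxx // => j _.
  by rewrite [X in _ * X]mxE mulr0.
have [yk Hy] := fin_all_exists Hk.
set Y := \sum_k yk k.
have HY0 : forall i, 1 <= Y i 0.
  move=> i; rewrite /Y summxE (bigD1 i) //=.
  have : 0 <= \sum_(k | k != i) yk k i 0 by apply: sumr_ge0 => k _; exact: (proj1 (Hy k) i).
  case: (Hy i) => _ [h _]; intros; lra.
have HYA : A^T *m Y = 0.
  by rewrite /Y mulmx_sumr big1 // => k _; case: (Hy k) => _ [_ ->].
have m0 : (0 < m)%N by apply: leq_trans Hnm.
pose i0 : 'I_m := Ordinal m0.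
set T := \sum_i s i 0 * Y i 0.
have Tpos : 0 < T.
  rewrite /T (bigD1 i0) //=.
  have : 0 <= \sum_(k | k != i0) s k 0 * Y k 0.
    by apply: sumr_ge0 => k _; exact: mulr_ge0 (ltW (Hspos k)) (le_trans ler01 (HY0 k)).
  have : 0 < s i0 0 * Y i0 0 by apply: mulr_gt0 => //; apply: lt_le_trans ltr01 (HY0 i0).
  intros; intros; lra.
set y := T^-1 *: Y.
set w := \col_i (s i 0 * y i 0).
have ypos : forall i, 0 < y i 0.
  move=> i; rewrite mxE; apply: mulr_gt0; first by rewrite invr_gt0.
  exact: lt_le_trans ltr01 (HY0 i).
have wpos : forall i, 0 < w i 0 by move=> i; rewrite mxE mulr_gt0.
have wsum : \sum_(i < m) w i 0 = 1.
  rewrite (eq_bigr (fun i => T^-1 * (s i 0 * Y i 0))); last first.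
    by move=> i _; rewrite !mxE mulrCA.
  by rewrite -mulr_sumr mulVf // gt_eqF.
exists w, y, s; split.
  split; first by rewrite /s addrC subrK.
  split; first exact: Hspos.
  split; first by rewrite /y -scalemxAr HYA scaler0.
  by move=> i; rewrite /w [RHS]mxE.
split; first exact: wpos.
split; first exact: wsum.
move=> i; split.
  rewrite /w [X in _ <= X]mxE [X in X <= _]mulrC.
  by apply: ler_wpM2r; [exact: ltW | case: (Hs i)].
case: (pickP (fun j => j != i)) => [j hj | hnone].
  move: wsum; rewrite (bigD1 i) //= (bigD1 j) //=.
  have : 0 <= \sum_(k | (k != i) && (k != j)) w k 0 by apply: sumr_ge0 => k _; exact: ltW (wpos k).
  have := wpos j; intros; lra.
exfalso.
have Aeq : A = 0.
  apply/matrixP => k j'.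
  have /eqP -> : k == i by have := hnone k; move/negbFE.
  have := congr1 (fun M : 'M[R]_(n,1) => M j' ord0) HYA.
  rewrite !mxE (bigD1 i) //= big1; last first.
    by move=> k' hk'; have := hnone k'; rewrite hk'.
  rewrite addr0 !mxE => /eqP; rewrite mulf_eq0 => /orP[/eqP //|/eqP Y0].
  by have := HY0 i; rewrite Y0; intros; lra.
by move: Hrank; rewrite Aeq mxrank0 => n0; move: Hn; rewrite -n0.
Qed.
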